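(* Let $n,k,r$ be integers with $k,r\geq 2$ and $n\geq k+r$, and let $H$ be a vertex-$k$-maximal $r$-uniform hypergraph on $n$ vertices with a separation triple $(S,H_1,H_2)$. Let $e$ be an $r$-subset of $V(H_1)$ or of $V(H_2)$ with $e\notin E(H)$. Then every subhypergraph $H'$ of $H+e$ with $\kappa(H')\geq k+1$ satisfies $V(H')\subseteq V(H_1)$ or $V(H')\subseteq V(H_2)$; i.e. $H'$ is a subhypergraph of $H_1+e$ or of $H_2+e$ (where $H_i+e$ is $H_i$ with $e$ added whenever $e\subseteq V(H_i)$). Moreover, if for some $i\in\{1,2\}$ we have $e\subseteq V(H_i)$ and $e\not\subseteq S$, then $H'$ is a subhypergraph of $H_i+e$.
   Context: A hypergraph $H=(V,E)$ consists of a finite vertex set $V$ and a set $E$ of non-empty subsets of $V$ (edges). $H$ is $r$-uniform if every edge has exactly $r$ elements. The complement $H^c$ of an $r$-uniform hypergraph $H=(V,E)$ is the $r$-uniform hypergraph on $V$ whose edges are the $r$-subsets of $V$ not in $E$. A subhypergraph of $H$ is $H'=(V',E')$ with $V'\subseteq V$, $E'\subseteq E$. For an $r$-subset $e\in E(H^c)$, $H+e=(V,E\cup\{e\})$. For $Y\subseteq V$, $H[Y]$ is the induced hypergraph with vertex set $Y$ and edges $\{e\in E: e\subseteq Y\}$, and $H-Y=H[V\setminus Y]$. A path is an alternating sequence $v_1,e_1,\dots,e_s,v_{s+1}$ of distinct vertices and distinct edges with $v_i,v_{i+1}\in e_i$; connectedness and components are defined via paths. A vertex-cut is a set $X\subseteq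 V$ with $H-X$ disconnected. The vertex-connectivity $\kappa(H)$ is the minimum size of a vertex-cut if one exists, and $|V(H)|-1$ otherwise. $\overline{\kappa}(H)=\max\{\kappa(H'): H'\text{ a subhypergraph of }H\}$. An $r$-uniform hypergraph $H$ is vertex-$k$-maximal if $\overline{\kappa}(H)\leq k$ but $\overline{\kappa}(H+e)\geq k+1$ for every $e\in E(H^c)$. For a vertex-$k$-maximal $r$-uniform $H$ with $|V(H)|\geq k+r$ (so $\kappa(H)=k$ and $H$ has vertex-cuts), a separation triple $(S,H_1,H_2)$ is obtained by taking a minimum vertex-cut $S$ (so $|S|=k$), a component $C_1$ of $H-S$, letting $C_2=H-(S\cup V(C_1))$, $H_1=H[S\cup V(C_1)]$ and $H_2=H[S\cup V(C_2)]$. *)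

(* Defs.v *)
From Stdlib Require Import ClassicalEpsilon.
From mathcomp Require Import all_boot.
Set Implicit Arguments. Unset Strict Implicit. Unset Printing Implicit Defensive.

Definition pb (P : Prop) : bool := if excluded_middle_informative P then true else false.

Record hypergraph (T : finType) := Hyp { hV : {set T}; hE : {set {set T}} }.

Section Hyper.
Variable T : finType.
Implicit Types (H : hypergraph T) (X Y e : {set T}).

Definition wf H : bool :=
  [forall e in hE H, (e != set0) && (e \subset hV H)].

Definition uniform (r : nat) H : bool := [forall e in hE H, #|e| == r].

Definition subhyp (H' H : hypergraph T) : bool :=
  [&& wf H', hV H' \subset hV H & hE H' \subset hE H].

Definition induced H Y : hypergraph T := Hyp Y [set e in hE H | e \subset Y].
Definition delv H Y : hypergraph T := induced H (hV H :\: Y).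
Definition addE H e : hypergraph T := Hyp (hV H) (e |: hE H).

Definition hpath H (x y : T) : Prop :=
  exists (vs : seq T) (es : seq {set T}),
    size vs = (size es).+1 /\ uniq vs /\ uniq es /\
    {subset vs <= hV H} /\ {subset es <= hE H} /\
    head x vs = x /\ last x vs = y /\
    (forall i, i < size es ->
          (nth x vs i \in nth set0 es i) && (nth x vs i.+1 \in nth set0 es i)).

Definition connected H : Prop := forall x y, x \in hV H -> y \in hV H -> hpath H x y.

Definition vertex_cut H X : bool := (X \subset hV H) && ~~ pb (connected (delv H X)).

Definition kappa H : nat :=
  if [exists X, vertex_cut H X]
  then \big[minn/#|hV H|]_(X | vertex_cut H X) #|X|
  else (#|hV H|).-1.

Definition kbar H : nat :=
  \max_(p : {set T} * {set {set T}} | subhyp (Hyp p.1 p.2) H) kappa (Hyp p.1 p.2).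

Definition vertex_k_maximal (k r : nat) H : Prop :=
  kbar H <= k /\
  forall e, e \subset hV H -> #|e| = r -> e \notin hE H -> k.+1 <= kbar (addE H e).

Definition comp_set H S (x : T) : {set T} :=
  [set y | pb (hpath (delv H S) x y)].

Definition sep_triple H S (H1 H2 : hypergraph T) : Prop :=
  vertex_cut H S /\ #|S| = kappa H /\
  exists x, x \in hV H :\: S /\
    H1 = induced H (S :|: comp_set H S x) /\
    H2 = induced H (S :|: (hV H :\: (S :|: comp_set H S x))).

Definition addE_if H e : hypergraph T := if e \subset hV H then addE H e else H.

End Hyper.

(* Main.v *)
Require Import Defs.
From Stdlib Require Import ClassicalEpsilon.
From mathcomp Require Import all_boot.
Set Implicit Arguments. Unset Strict Implicit. Unset Printing Implicit Defensive.

Lemma pbP (P : Prop) : reflect P (pb P).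
Proof. rewrite /pb; case: excluded_middle_informative => h; by constructor. Qed.

Section S.
Variable T : finType.
Implicit Types (H : hypergraph T).

Lemma bigmin_le_seq (I : eqType) (s : seq I) (P : pred I) (F : I -> nat) i0 y :
  y \in s -> P y -> \big[minn/i0]_(x <- s | P x) F x <= F y.
Proof.
elim: s => //= a s IH; rewrite in_cons big_cons => /orP [/eqP <- ->|ys Py].
  exact: geq_minl.
case: (P a); last exact: IH.
by rewrite geq_min IH // orbT.
Qed.

Lemma kappa_le_cut H X : vertex_cut H X -> kappa H <= #|X|.
Proof.
move=> hX; rewrite /kappa.
have -> : [exists X, vertex_cut H X] by apply/existsP; exists X.
by apply: bigmin_le_seq; rewrite ?mem_index_enum.
Qed.

Lemma kappa_le_kbar H' H : subhyp H' H -> kappa H' <= kbar H.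
Proof.
case: H' => V E hs; rewrite /kbar.
by apply: (leq_bigmax_cond (V, E)).
Qed.

Lemma hpath_ext G (x y z : T) (f : {set T}) :
  hpath G x y -> f \in hE G -> y \in f -> z \in f -> z \in hV G -> hpath G x z.
Proof.
move=> [vs [es [hs [uv [ue [sv [se [hh [hl he]]]]]]]]] fE yf zf zV.
have headtake : forall m, head x (take m.+1 vs) = x.
  by move=> m; rewrite -hh; case: (vs) hs.
case: (boolP (z \in vs)) => zvs.
  set j := index z vs.
  have jlt : j < size vs by rewrite index_mem.
  have jle : j <= size es by rewrite -ltnS -hs.
  exists (take j.+1 vs), (take j es).
  rewrite size_takel // size_takel //.
  split => //; split; first exact: take_uniq.
  split; first exact: take_uniq.
  split; first by move=> v /mem_take /sv.
  split; first by move=> v /mem_take /se.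
  split; first exact: headtake.
  split.
    by rewrite -nth_last size_takel //= nth_take // nth_index.
  move=> i ilt; rewrite !nth_take ?(ltnW ilt) //; last by rewrite ltnS ltnW.
  by apply: he; apply: leq_trans ilt jle.
case: (boolP (f \in es)) => fes.
  set j := index f es.
  have jlt : j < size es by rewrite index_mem.
  exists (rcons (take j.+1 vs) z), (take j.+1 es).
  have stv : size (take j.+1 vs) = j.+1 by rewrite size_takel // hs ltnS ltnW.
  rewrite size_rcons stv size_takel //.
  split => //; split; first by rewrite rcons_uniq take_uniq // andbT;
    apply: contra zvs => /mem_take.
  split; first exact: take_uniq.
  split; first by move=> v; rewrite mem_rcons inE => /orP [/eqP->//|/mem_take /sv].
  split; first by move=> v /mem_take /se.
  split; first by rewrite -(headtake j); case: (take j.+1 vs) stv.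
  split; first by rewrite last_rcons.
  move=> i; rewrite ltnS leq_eqVlt => /orP [/eqP ->|ilt].
    rewrite !nth_rcons stv ltnSn ltnn eqxx nth_take // nth_take //.
    have := he j jlt; rewrite nth_index // => /andP [-> _]; done.
  rewrite !nth_rcons stv !ltnS ilt (ltnW ilt) !nth_take ?ltnS ?(ltnW ilt) //.
  by apply: he; apply: ltn_trans ilt jlt.
exists (rcons vs z), (rcons es f).
rewrite !size_rcons hs.
split => //; split; first by rewrite rcons_uniq zvs uv.
split; first by rewrite rcons_uniq fes ue.
split; first by move=> v; rewrite mem_rcons inE => /orP [/eqP->//|/sv].
split; first by move=> v; rewrite mem_rcons inE => /orP [/eqP->//|/se].
split; first by rewrite -hh; case: (vs) hs.
split; first by rewrite last_rcons.
move=> i; rewrite ltnS leq_eqVlt => /orP [/eqP ->|ilt].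
  rewrite !nth_rcons hs ltnSn ltnn eqxx -hs ltnn eqxx zf andbT.
  have -> : size es = (size vs).-1 by rewrite hs.
  by rewrite nth_last hl.
rewrite !nth_rcons hs !ltnS ilt (ltnW ilt).
exact: he.
Qed.

Lemma comp_closed (H H' : hypergraph T) (S e X : {set T}) (x w u : T) :
  X = S :&: hV H' -> hV H' \subset hV H -> hE H' \subset e |: hE H ->
  (e \subset S :|: comp_set H S x) ||
    (e \subset S :|: (hV H :\: (S :|: comp_set H S x))) ->
  w \in comp_set H S x -> hpath (delv H' X) w u -> u \in comp_set H S x.
Proof.
move=> -> sV sE he wC [vs [es [hs [_ [_ [sv [se [hh [hl hed]]]]]]]]].
suff: forall i, i <= size es -> nth w vs i \in comp_set H S x.
  move/(_ (size es) (leqnn _)).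
  have -> : size es = (size vs).-1 by rewrite hs.
  by rewrite nth_last hl.
elim=> [_|i IH ile]; first by rewrite nth0 hh.
have ilt : i < size es := ile.
have hi := IH (ltnW ile).
have /andP [a b] := hed i ilt.
have fE : nth set0 es i \in hE (delv H' (S :&: hV H')) by apply: se; rewrite mem_nth.
move: a b fE; set f := nth set0 es i => a b.
rewrite /delv /induced /= inE => /andP [fH' fsub].
have fS : f \subset hV H :\: S.
  apply/subsetP => v vf; move/subsetP: fsub => /(_ v vf); rewrite !inE.
  move=> /andP [vn vH']; move: vn; rewrite vH' andbT => ->.
  by move/subsetP: sV => /(_ v vH').
case: (boolP (f \in hE H)) => fH.
  rewrite inE; apply/pbP; apply: (hpath_ext (y:=nth w vs i) (f:=f)).
  - by move: hi; rewrite inE => /pbP.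
  - by rewrite /delv /induced /= inE fH fS.
  - exact: a.
  - exact: b.
  - by move/subsetP: fS => /(_ _ b).
have fe : f = e.
  by move/subsetP: sE => /(_ f fH'); rewrite !inE (negbTE fH) orbF => /eqP.
move: a b; rewrite fe => a b.
have notS : forall v, v \in e -> v \notin S.
  move=> v ve; have vf : v \in f by rewrite fe.
  by move/subsetP: fS => /(_ v vf); rewrite inE => /andP [].
case/orP: he => /subsetP hsub.
  by move: (hsub _ b); rewrite inE (negbTE (notS _ b)).
move: (hsub _ a); rewrite !inE (negbTE (notS _ a)) /=.
by move: hi; rewrite inE => ->.
Qed.

Lemma sub_part (H H' : hypergraph T) (e Y : {set T}) :
  wf H' -> e \in hE H' -> hV H' \subset Y -> hE H' \subset e |: hE H ->
  subhyp H' (addE_if (induced H Y) e).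
Proof.
move=> wfH' eH' sY sE.
have wfE : forall f, f \in hE H' -> f \subset hV H'.
  by move=> f fH; move/forallP: wfH' => /(_ f) /implyP /(_ fH) /andP [].
have eY : e \subset Y by apply: subset_trans sY; apply: wfE.
rewrite /addE_if /= eY /subhyp wfH' /= sY /=.
apply/subsetP => f fH; move/subsetP: sE => /(_ f fH); rewrite !inE.
case/orP=> [->//|fh].
rewrite fh /=; apply/orP; right.
by apply: subset_trans sY; apply: wfE.
Qed.

End S.

Theorem lemma2p2 (T : finType) (n k r : nat) (H H1 H2 : hypergraph T)
    (S e : {set T}) :
  2 <= k -> 2 <= r -> k + r <= n ->
  wf H -> uniform r H -> #|hV H| = n ->
  vertex_k_maximal k r H ->
  sep_triple H S H1 H2 ->
  #|e| = r -> (e \subset hV H1) || (e \subset hV H2) -> e \notin hE H ->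
  forall H' : hypergraph T, subhyp H' (addE H e) -> k.+1 <= kappa H' ->
    ((hV H' \subset hV H1) || (hV H' \subset hV H2)) /\
    (subhyp H' (addE_if H1 e) || subhyp H' (addE_if H2 e)) /\
    ((e \subset hV H1) -> ~~ (e \subset S) -> subhyp H' (addE_if H1 e)) /\
    ((e \subset hV H2) -> ~~ (e \subset S) -> subhyp H' (addE_if H2 e)).
Proof.
move=> k2 r2 kn wfH uH cardH [kbH maxH] [cutS [cardS [x [xV [-> ->]]]]]
  ce eH1H2 eH H' sub kH'.
move: eH1H2; rewrite /=; set C := comp_set H S x => eH1H2.
case/and3P: sub => wfH' sV' sE'; rewrite /= in sV' sE'.
have kbk : forall G, subhyp G H -> kappa G <= k.
  by move=> G /kappa_le_kbar /leq_trans; apply.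
have wfE : forall f, f \in hE H' -> f \subset hV H'.
  by move=> f fH; move/forallP: wfH' => /(_ f) /implyP /(_ fH) /andP [].
have eH' : e \in hE H'.
  apply/negPn/negP => enH.
  have : subhyp H' H.
    rewrite /subhyp wfH' sV' /=; apply/subsetP => f fH.
    move/subsetP: sE' => /(_ f fH); rewrite !inE => /orP [/eqP fe|//].
    by subst f; rewrite fH in enH.
  by move/kbk; rewrite leqNgt kH'.
have main : (hV H' \subset S :|: C) || (hV H' \subset S :|: (hV H :\: (S :|: C))).
  case: (boolP (hV H' \subset S :|: C)) => //= h1.
  apply/subsetP => w wH'.
  have wV := subsetP sV' w wH'.
  case: (boolP (w \in C)) => wC; last first.
    by rewrite in_setU in_setD in_setU (negbTE wC) orbF wV andbT; case: (w \in S).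
  rewrite in_setU in_setD in_setU wC orbT /= orbF.
  apply/negPn/negP => wS'; have wS := negbTE wS'.
  move/subsetPn: h1 => [u uH' uN]; move: uN; rewrite !inE negb_or => /andP [uS uC].
  have cut : vertex_cut H' (S :&: hV H').
    rewrite /vertex_cut subsetIr /=; apply/negP => /pbP con.
    have hp : hpath (delv H' (S :&: hV H')) w u.
      by apply: con; rewrite /= !inE ?wS ?wH' ?(negbTE uS) ?uH'.
    have := comp_closed (erefl _) sV' sE' eH1H2 wC hp.
    by rewrite inE (negbTE uC).
  have c1 := kappa_le_cut cut.
  have c2 : #|S :&: hV H'| <= #|S| by apply: subset_leq_card; apply: subsetIl.
  have c3 : kappa H <= k by apply: kbk; rewrite /subhyp wfH !subxx.
  have := leq_trans c1 (leq_trans c2 (leq_trans (eq_leq cardS) c3)).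
  by rewrite leqNgt kH'.
have part2 : forall Y : {set T}, hV H' \subset Y -> subhyp H' (addE_if (induced H Y) e).
  by move=> Y sY; apply: sub_part.
have nsS : ~~ (e \subset S) -> exists2 v, v \in e & v \notin S.
  by move/subsetPn => [v ve vS]; exists v.
split; first by exact: main.
split; first by case/orP: main => h; apply/orP; [left|right]; apply: part2.
split.
  move=> /= eC /nsS [v ve vS]; apply: part2.
  case/orP: main => // /subsetP h.
  have vH' : v \in hV H' by move/subsetP: (wfE _ eH') => /(_ v ve).
  move: (h v vH') (subsetP eC v ve); rewrite !inE (negbTE vS) /=.
  by move=> /andP [/negbTE ->].
move=> /= eC /nsS [v ve vS]; apply: part2.
case/orP: main => // /subsetP h.
have vH' : v \in hV H' by move/subsetP: (wfE _ eH') => /(_ v ve).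
move: (h v vH') (subsetP eC v ve); rewrite !inE (negbTE vS) /=.
by move=> -> /andP [].
Qed.
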